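(* Suppose the p-values are conditionally super-uniform: for every $t$ with $\theta_t=0$, $\mathbb{P}(p_t\le U\mid\mathcal{F}_{t-1})\le U$ a.s. for every $\mathcal F_{t-1}$-measurable $[0,1]$-valued $U$. Fix $d\in(0,1]$. (a) If the $\mathcal{F}_{t-1}$-measurable testing levels satisfy, a.s. for every $t\ge1$, $\sum_{j=1}^t\frac{\alpha_j}{dR^{\mathrm d}_{j-1}+1}\le\alpha$, then $\mathrm{mem\text{-}FDR}(t)\le\alpha$ for all $t$. (b) Let $(\lambda_t)_{t\ge1}$ be $(0,1)$-valued with each $\lambda_t$ $\mathcal{F}_{t-1}$-measurable, and let $\mathrm{mem\text{-}}\widehat{\mathrm{FDP}}^{\mathrm{pS\text{-}RAI}}(t):=\sum_{j=1}^t\frac{\alpha_j}{dR^{\mathrm d}_{j-1}+1}\cdot\frac{\mathbb{1}\{p_j>\lambda_j\}}{1-\lambda_j}$. Then (i) $\mathbb{E}[\mathrm{mem\text{-}}\widehat{\mathrm{FDP}}^{\mathrm{pS\text{-}RAI}}(t)]\ge\mathbb{E}[\mathrm{mem\text{-}FDP}^*(t)]$ for all $t$, where $\mathrm{mem\text{-}FDP}^*(t)=\sum_{j\in\mathcal{H}_0(t)}\alpha_j/(dR^{\mathrm d}_{j-1}+1)$; and (ii) if the testing levels satisfy $\mathrm{mem\text{-}}\widehat{\mathrm{FDP}}^{\mathrm{pS\text{-}RAI}}(t)\le\alpha$ a.s. for every $t$, then $\mathrm{mem\text{-}FDR}(t)\le\alpha$ for all $t$.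
   Context: Let $\alpha\in(0,1)$ be a target level. Hypotheses are indexed by $t=1,2,\dots$; $\theta_t\in\{0,1\}$ is a fixed (non-random) indicator with $\theta_t=0$ iff the $t$-th null hypothesis is true. $p_1,p_2,\dots$ are $[0,1]$-valued random variables (p-values). Testing levels $\alpha_1,\alpha_2,\dots$ are $[0,1]$-valued random variables and the decisions are $\delta_t=\mathbb{1}\{p_t\le\alpha_t\}$. Let $\mathcal{F}_t=\sigma(\delta_1,\dots,\delta_t)$, $\mathcal{F}_0$ trivial; each $\alpha_t$ is required to be $\mathcal{F}_{t-1}$-measurable. $\mathcal{H}_0(t)=\{j\le t:\theta_j=0\}$. For a decay parameter $d\in(0,1]$, $R^{\mathrm d}_t=\sum_{j=1}^t d^{t-j}\delta_j$ with $R^{\mathrm d}_0=0$, and $\mathrm{mem\text{-}FDR}(t)=\mathbb{E}\big[\sum_{j\in\mathcal{H}_0(t)}d^{t-j}\delta_j\big/R^{\mathrm d}_t\big]$ with the convention $0/0=0$. *)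

(* Defs.v *)
From mathcomp Require Import all_boot all_order all_algebra.
From mathcomp Require Import all_classical all_reals all_analysis.
Set Implicit Arguments. Unset Strict Implicit. Unset Printing Implicit Defensive.
Import Order.TTheory GRing.Theory Num.Theory.
Local Open Scope classical_set_scope.
Local Open Scope ring_scope.

Section Defs.
Context {dT : measure_display} {T : measurableType dT} {R : realType}.

Definition delta (p alpha : nat -> T -> R) (t : nat) (w : T) : bool :=
  p t w <= alpha t w.

Definition dvec (p alpha : nat -> T -> R) (n : nat) (w : T) : nat -> bool :=
  fun j => ((0 < j <= n)%N && delta p alpha j w).

(* F_n = sigma(delta_1,...,delta_n): preimages of (arbitrary, since the
   range is finite/discrete) sets under the random vector (delta_1..delta_n) *)
Definition Fsig (p alpha : nat -> T -> R) (n : nat) : set (set T) :=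
  [set A | exists B : set (nat -> bool), A = dvec p alpha n @^-1` B].

Definition Fmeas (p alpha : nat -> T -> R) (n : nat) (U : T -> R) : Prop :=
  forall B : set R, measurable B -> Fsig p alpha n (U @^-1` B).

Definition Rdec (p alpha : nat -> T -> R) (dec : R) (t : nat) (w : T) : R :=
  \sum_(1 <= j < t.+1) dec ^+ (t - j) * (delta p alpha j w)%:R.

(* theta j = true iff the j-th null is false; H_0 = {j | ~~ theta j} *)
(* mem-FDP(t); division by 0 gives 0 in MathComp (0/0 = 0 convention) *)
Definition memFDP (p alpha : nat -> T -> R) (theta : nat -> bool) (dec : R)
  (t : nat) (w : T) : R :=
  (\sum_(1 <= j < t.+1 | ~~ theta j) dec ^+ (t - j) * (delta p alpha j w)%:R)
  / Rdec p alpha dec t w.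

Definition memLevelSum (p alpha : nat -> T -> R) (dec : R) (t : nat) (w : T) : R :=
  \sum_(1 <= j < t.+1) alpha j w / (dec * Rdec p alpha dec j.-1 w + 1).

Definition memFDPstar (p alpha : nat -> T -> R) (theta : nat -> bool) (dec : R)
  (t : nat) (w : T) : R :=
  \sum_(1 <= j < t.+1 | ~~ theta j) alpha j w / (dec * Rdec p alpha dec j.-1 w + 1).

Definition memFDPhat (p alpha lambda : nat -> T -> R) (dec : R) (t : nat) (w : T) : R :=
  \sum_(1 <= j < t.+1) alpha j w / (dec * Rdec p alpha dec j.-1 w + 1)
     * ((lambda j w < p j w)%R%:R / (1 - lambda j w)).

End Defs.

(* Main.v *)
Require Import Defs.
From mathcomp Require Import all_boot all_order all_algebra.
From mathcomp Require Import all_classical all_reals all_analysis.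
From mathcomp Require Import measurable_realfun.
From mathcomp Require Import ring lra.
Import Order.TTheory GRing.Theory Num.Theory.
Local Open Scope classical_set_scope.
Local Open Scope ring_scope.

Section S.
Context (dT : measure_display) (T : measurableType dT) (R : realType)
  (p alpha : nat -> T -> R).
Hypothesis mp : forall t, (0 < t)%N -> measurable_fun setT (p t).
Hypothesis ma : forall t, (0 < t)%N -> measurable_fun setT (alpha t).

Definition vec n (w : T) : {ffun 'I_n -> bool} := [ffun i : 'I_n => delta p alpha i.+1 w].
Definition atom n (v : {ffun 'I_n -> bool}) : set T := [set w | vec n w = v].
Definition AC n (f : T -> R) := forall w w', vec n w = vec n w' -> f w = f w'.

Lemma mdelta j : (0 < j)%N -> measurable [set w | delta p alpha j w].
Proof.
move=> j0.
have := @measurable_fun_ler _ _ _ setT _ _ (mp _ j0) (ma _ j0) measurableT [set true] I.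
rewrite setTI; congr measurable; apply/seteqP; split => w /=; rewrite /preimage /delta /=; by move=> ->.
Qed.

Lemma mdeltaR j : (0 < j)%N -> measurable_fun setT (fun w => (delta p alpha j w)%:R : R).
Proof.
move=> j0; rewrite (_ : (fun w => _) = \1_[set w | delta p alpha j w]).
  exact: measurable_indic (mdelta _ j0).
apply/funext => w; rewrite indicE; case: (boolP (delta p alpha j w)) => h.
  by rewrite mem_set.
by rewrite memNset //= => /= h'; rewrite h' in h.
Qed.

Lemma bigsetI_seqP (I : eqType) (s : seq I) (F : I -> set T) w :
  (\big[setI/setT]_(i <- s) F i) w <-> (forall i, i \in s -> F i w).
Proof.
elim: s => [|a s IH]; first by rewrite big_nil; split.
rewrite big_cons; split.
  by move=> [Fa /IH H] i; rewrite in_cons => /orP[/eqP ->|/H].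
move=> H; split; first by apply: H; rewrite mem_head.
by apply/IH => i Hi; apply: H; rewrite in_cons Hi orbT.
Qed.

Lemma matom n v : measurable (atom n v).
Proof.
rewrite (_ : atom n v = \big[setI/setT]_(i <- enum 'I_n)
     (if v i then [set w | delta p alpha i.+1 w] else ~` [set w | delta p alpha i.+1 w])).
  apply: bigsetI_measurable => i _; case: (v i).
    exact: mdelta.
  exact/measurableC/mdelta.
apply/seteqP; split => w.
  rewrite /atom /= => <-; apply/bigsetI_seqP => i _; rewrite ffunE.
  case E: (delta p alpha i.+1 w); rewrite /=. exact E. move=> /=; by rewrite E.
move/bigsetI_seqP => H; rewrite /atom /=; apply/ffunP => i; rewrite ffunE.
have := H i (mem_enum _ i).
case: (v i) => /=; first by [].
by case: (delta p alpha i.+1 w) => // /(_ isT).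
Qed.


Lemma delta_AC n j w w' : (0 < j <= n)%N -> vec n w = vec n w' ->
  delta p alpha j w = delta p alpha j w'.
Proof.
case/andP=> j0 jn H.
have jn' : (j.-1 < n)%N by rewrite prednK.
have := congr1 (fun f : {ffun 'I_n -> bool} => f (Ordinal jn')) H.
by rewrite !ffunE /= prednK.
Qed.

Lemma vec_le m n w w' : (m <= n)%N -> vec n w = vec n w' -> vec m w = vec m w'.
Proof.
move=> mn H; apply/ffunP => i; rewrite !ffunE; apply: (@delta_AC n) => //.
by rewrite /= (leq_trans (ltn_ord i) mn).
Qed.

Lemma dvec_AC n w w' : vec n w = vec n w' -> dvec p alpha n w = dvec p alpha n w'.
Proof.
move=> H; apply/funext => j; rewrite /dvec; case: (boolP (0 < j <= n)%N) => //= h.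
exact: (@delta_AC n j w w' h H).
Qed.

Lemma Fmeas_AC n U : Fmeas p alpha n U -> AC n U.
Proof.
move=> FU w w' H.
have [B HB] := FU [set U w] (measurable_set1 _).
have : (U @^-1` [set U w]) w by [].
rewrite HB /preimage /= (@dvec_AC n w w' H) => Bw'.
have : (dvec p alpha n @^-1` B) w' by [].
by rewrite -HB /preimage /= => ->.
Qed.

Lemma bigsetU_seqP (I : eqType) (s : seq I) (P : pred I) (F : I -> set T) w :
  (\big[setU/set0]_(i <- s | P i) F i) w <-> (exists i, [/\ i \in s, P i & F i w]).
Proof.
elim: s => [|a s IH]; first by rewrite big_nil; split => // -[i []]; rewrite in_nil.
rewrite big_cons; case: (boolP (P a)) => Pa; split.
- case => [Fa|/IH [i [si Pi Fi]]]; first by exists a; rewrite mem_head.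
  by exists i; rewrite in_cons si orbT.
- case=> i [+ Pi Fi]; rewrite in_cons => /orP[/eqP Ei|si]; first by left; rewrite -Ei.
  by right; apply/IH; exists i.
- move/IH => [i [si Pi Fi]]; by exists i; rewrite in_cons si orbT.
- case=> i [+ Pi Fi]; rewrite in_cons => /orP[/eqP Ei|si].
    by rewrite -Ei Pi in Pa.
  by apply/IH; exists i.
Qed.

Lemma AC_meas n f : AC n f -> measurable_fun setT f.
Proof.
move=> Hf _ B mB; rewrite setTI.
rewrite (_ : f @^-1` B = \big[setU/set0]_(v <- enum {ffun 'I_n -> bool} |
     `[< exists w, vec n w = v /\ B (f w) >]) atom n v).
  by apply: bigsetU_measurable => v _; exact: matom.
apply/seteqP; split => w.
  move=> Bw; apply/bigsetU_seqP; exists (vec n w); split.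
  - exact: mem_enum.
  - by apply/asboolP; exists w.
  - by [].
move/bigsetU_seqP => [v [_ /asboolP [w0 [Ev Bw0]] Aw]].
by rewrite /preimage /= (Hf w w0) // Ev.
Qed.


Section Rd.
Variable dec : R.
Hypothesis dec0 : 0 <= dec.

Lemma Rdec_ge0 t w : 0 <= Rdec p alpha dec t w.
Proof. by rewrite /Rdec; apply: sumr_ge0 => j _; rewrite mulr_ge0 // exprn_ge0. Qed.

Lemma Rdec_rec m w : Rdec p alpha dec m.+1 w =
  dec * Rdec p alpha dec m w + (delta p alpha m.+1 w)%:R.
Proof.
rewrite /Rdec big_nat_recr //= subnn expr0 mul1r; congr (_ + _).
rewrite big_distrr /=; apply: eq_big_nat => j /andP[_ jm].
by rewrite mulrA -exprS subSn.
Qed.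

Lemma Rdec_mono j t w : (j <= t)%N ->
  dec ^+ (t - j) * Rdec p alpha dec j w <= Rdec p alpha dec t w.
Proof.
elim: t => [|t IH] hj.
  by move: hj; rewrite leqn0 => /eqP ->; rewrite subnn expr0 mul1r.
case: (ltngtP j t.+1) hj => // [jt _|-> _]; last by rewrite subnn expr0 mul1r.
rewrite Rdec_rec subSn // exprS -mulrA.
apply: (le_trans (y := dec * Rdec p alpha dec t w)).
  by apply: ler_wpM2l => //; apply: IH.
by rewrite lerDl ler0n.
Qed.

Lemma Rdec_AC m n w w' : (m <= n)%N -> vec n w = vec n w' ->
  Rdec p alpha dec m w = Rdec p alpha dec m w'.
Proof.
move=> mn H; apply: eq_big_nat => j /andP[j1 jm].
rewrite (@delta_AC n j w w') //.
by rewrite j1 /= (leq_trans _ mn) // -ltnS.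
Qed.

End Rd.

Section Int.
Variable P : probability T R.
Local Open Scope ereal_scope.

Lemma int_sum (I : eqType) (s : seq I) (Pr : pred I) (F : I -> T -> R) :
  (forall j, j \in s -> Pr j -> measurable_fun setT (F j) /\ (forall w, (0 <= F j w)%R)) ->
  \int[P]_w (\sum_(j <- s | Pr j) F j w)%:E = \sum_(j <- s | Pr j) \int[P]_w (F j w)%:E.
Proof.
move=> HF.
pose G j w := if (j \in s) && Pr j then F j w else 0%R.
have eqL w : (\sum_(j <- s | Pr j) F j w = \sum_(j <- s) G j w)%R.
  rewrite big_mkcond /= big_seq [RHS]big_seq; apply: eq_bigr => j js.
  by rewrite /G js.
rewrite (eq_integral (fun w => \sum_(j <- s) (G j w)%:E)); last first.
  by move=> w _; rewrite eqL sumEFin.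
rewrite (@ge0_integral_sum _ _ _ P setT measurableT _ (fun j x => (G j x)%:E)) //; last first.
  move=> j w _; rewrite /G lee_fin; case: ifPn => // /andP[js Pj].
  by case: (HF j js Pj) => _ ->.
  move=> j; apply/measurable_EFinP; rewrite /G; case H: ((j \in s) && Pr j).
    by move/andP: H => [js Pj]; case: (HF j js Pj).
  exact: measurable_cst.
rewrite [RHS]big_mkcond /= big_seq [RHS]big_seq; apply: eq_bigr => j js.
case: ifPn => Pj.
  by apply: eq_integral => w _; rewrite /G js Pj.
rewrite (eq_integral (cst 0%:E)) ?integral0 // => w _.
by rewrite /G js (negbTE Pj).
Qed.

Lemma meas_sum (I : eqType) (s : seq I) (Pr : pred I) (F : I -> T -> R) :
  (forall j, j \in s -> Pr j -> measurable_fun setT (F j)) ->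
  measurable_fun setT (fun w => \sum_(j <- s | Pr j) F j w)%R.
Proof.
move=> HF.
pose G j w := if (j \in s) && Pr j then F j w else 0%R.
rewrite (_ : (fun w => _) = (fun w => \sum_(j <- s) G j w)%R).
  apply: measurable_sum => j; rewrite /G; case H: ((j \in s) && Pr j).
    by move/andP: H => [js Pj]; exact: HF.
  exact: measurable_cst.
apply/funext => w.
rewrite big_mkcond /= big_seq [RHS]big_seq; apply: eq_bigr => j js.
by rewrite /G js.
Qed.

Lemma indic_ge0' (A : set T) w : (0 <= \1_A w :> R)%R.
Proof. by rewrite indicE ler0n. Qed.

Lemma decomp n (f : T -> R) : measurable_fun setT f -> (forall w, 0 <= f w)%R ->
  \int[P]_w (f w)%:E = \sum_(v <- enum {ffun 'I_n -> bool})
      \int[P]_w (\1_(atom n v) w * f w)%:E.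
Proof.
move=> mf f0.
rewrite -int_sum; last first.
  move=> v _ _; split; first by apply: measurable_funM => //; apply: measurable_indic; exact: matom.
  by move=> w; rewrite mulr_ge0 // indic_ge0'.
apply: eq_integral => w _; congr (_%:E).
rewrite -big_distrl /= (bigD1_seq (vec n w)) ?mem_enum ?enum_uniq //=.
rewrite big1 ?addr0.
  by rewrite indicE mem_set ?mul1r.
move=> v hv; rewrite indicE memNset //= /atom /= => E.
by rewrite E eqxx in hv.
Qed.

Lemma compare n (f1 f2 : T -> R) :
  measurable_fun setT f1 -> (forall w, 0 <= f1 w)%R ->
  measurable_fun setT f2 -> (forall w, 0 <= f2 w)%R ->
  (forall v w0, atom n v w0 ->
     \int[P]_w (\1_(atom n v) w * f1 w)%:E <= \int[P]_w (\1_(atom n v) w * f2 w)%:E) ->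
  \int[P]_w (f1 w)%:E <= \int[P]_w (f2 w)%:E.
Proof.
move=> m1 p1 m2 p2 H.
rewrite (@decomp n f1 m1 p1) (@decomp n f2 m2 p2); apply: lee_sum => v _.
case: (pselect (exists w0, atom n v w0)) => [[w0 Hw0]|nH]; first exact: H Hw0.
rewrite (eq_integral (cst 0%:E)); last first.
  move=> w _; rewrite indicE memNset ?mul0r //.
  by move=> Aw; apply: nH; exists w.
rewrite integral0.
by apply: integral_ge0 => w _; rewrite lee_fin mulr_ge0 // indic_ge0'.
Qed.

Lemma atom_int (A S : set T) (k : R) (f : T -> R) :
  measurable A -> measurable S -> (0 <= k)%R ->
  (forall w, A w -> f w = k * \1_S w)%R ->
  \int[P]_w (\1_A w * f w)%:E = k%:E * P (S `&` A).
Proof.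
move=> mA mS k0 Hf.
transitivity (\int[P]_w (k%:E * (\1_(S `&` A) w)%:E)).
  apply: eq_integral => w _; rewrite -EFinM; congr (_%:E).
  case: (boolP (w \in A)) => wA.
    rewrite Hf; last exact: set_mem wA.
    by rewrite (@indicE _ _ A w) wA mul1r (@indicE _ _ (S `&` A) w) in_setI wA andbT (@indicE _ _ S w).
  by rewrite (@indicE _ _ A w) (negbTE wA) (@indicE _ _ (S `&` A) w) in_setI (negbTE wA) andbF !mul0r mulr0.
have mSA : measurable (S `&` A) by exact: measurableI.
rewrite ge0_integralZl_EFin //.
- by rewrite integral_indic // setIT.
- by apply/measurable_EFinP; apply: measurable_indic.
Qed.

Lemma int_atom_cst n v w0 (U : T -> R) : AC n U -> atom n v w0 ->
  \int[P]_(w in atom n v) (U w)%:E = (U w0)%:E * P (atom n v).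
Proof.
move=> HU Aw0; rewrite -integral_cst; last exact: matom.
apply: eq_integral => w; rewrite inE /atom /= => Aw.
by rewrite (HU w w0) // Aw Aw0.
Qed.

End Int.

Lemma mset_ler (f g : T -> R) : measurable_fun setT f -> measurable_fun setT g ->
  measurable [set w | f w <= g w].
Proof.
move=> mf mg.
have := @measurable_fun_ler _ _ _ setT _ _ mf mg measurableT [set true] I.
rewrite setTI; congr measurable; apply/seteqP; split => w /=; rewrite /preimage /=; by move=> ->.
Qed.

Lemma mset_ltr (f g : T -> R) : measurable_fun setT f -> measurable_fun setT g ->
  measurable [set w | f w < g w].
Proof.
move=> mf mg.
have := @measurable_fun_ltr _ _ _ setT _ _ mf mg measurableT [set true] I.
rewrite setTI; congr measurable; apply/seteqP; split => w /=; rewrite /preimage /=; by move=> ->.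
Qed.

Lemma boolR_indic (b : T -> bool) w : (b w)%:R = \1_[set w | b w] w :> R.
Proof.
rewrite indicE; case: (boolP (b w)) => h; first by rewrite mem_set.
by rewrite memNset //= => /= h'; rewrite h' in h.
Qed.

Lemma mboolR (b : T -> bool) : measurable [set w | b w] ->
  measurable_fun setT (fun w => (b w)%:R : R).
Proof.
move=> mb; rewrite (_ : (fun w => _) = \1_[set w | b w]).
  exact: measurable_indic.
by apply/funext => w; rewrite boolR_indic.
Qed.

Lemma Fsig_atom n v : Fsig p alpha n (atom n v).
Proof.
exists [set x : nat -> bool | forall i : 'I_n, x i.+1 = v i].
apply/seteqP; split => w /=.
  by rewrite /atom /preimage /= => <- i; rewrite /dvec ffunE ltn_ord.
rewrite /preimage /= /atom /= => H; apply/ffunP => i; rewrite ffunE -H.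
by rewrite /dvec ltn_ord.
Qed.

Section Main.
Variable P : probability T R.
Variables (dec : R) (theta : nat -> bool).
Hypothesis dec01 : 0 < dec <= 1.
Hypothesis ha01 : forall t, (0 < t)%N -> forall w, 0 <= alpha t w <= 1.
Hypothesis hFa : forall t, (0 < t)%N -> Fmeas p alpha t.-1 (alpha t).
Hypothesis hsu : forall t, (0 < t)%N -> ~~ theta t ->
     forall U : T -> R, Fmeas p alpha t.-1 U -> (forall w, 0 <= U w <= 1) ->
     forall A, Fsig p alpha t.-1 A ->
     (P (A `&` [set w | (p t w <= U w)%R]) <= \int[P]_(w in A) (U w)%:E)%E.

Let dec0 : 0 <= dec. Proof. by case/andP: dec01 => /ltW. Qed.

Definition den j w := dec * Rdec p alpha dec j.-1 w + 1.

Lemma den_gt0 j w : 0 < den j w.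
Proof. by rewrite /den ltr_wpDl // mulr_ge0 // Rdec_ge0. Qed.

Lemma den_AC n j : (j.-1 <= n)%N -> AC n (den j).
Proof. by move=> jn w w' H; rewrite /den (@Rdec_AC dec j.-1 n w w'). Qed.

Lemma alpha_AC n j : (0 < j)%N -> (j.-1 <= n)%N -> AC n (alpha j).
Proof.
move=> j0 jn w w' H. apply: (@Fmeas_AC _ _ (hFa j j0) w w').
exact: (@vec_le j.-1 n w w' jn H).
Qed.

Lemma core1 j : (0 < j)%N -> ~~ theta j ->
  (\int[P]_w ((delta p alpha j w)%:R / den j w)%:E <=
   \int[P]_w (alpha j w / den j w)%:E)%E.
Proof.
move=> j0 nt.
have ACd : AC j.-1 (fun w => (den j w)^-1).
  by move=> w w' H; rewrite (@den_AC j.-1 j (leqnn _) w w' H).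
have ACa : AC j.-1 (fun w => alpha j w / den j w).
  by move=> w w' H; rewrite (@den_AC j.-1 j (leqnn _) w w' H) (@alpha_AC j.-1 j j0 (leqnn _) w w' H).
apply: (@compare P j.-1).
- apply: measurable_funM; last exact: AC_meas ACd.
  by apply: mboolR; exact: mdelta.
- by move=> w; rewrite divr_ge0 // ?ler0n // ltW // den_gt0.
- exact: AC_meas ACa.
- by move=> w; rewrite divr_ge0 //; [case/andP: (ha01 j j0 w)|rewrite ltW // den_gt0].
move=> v w0 Aw0.
rewrite (@atom_int P _ [set w | delta p alpha j w] (den j w0)^-1); first last.
- move=> w Aw; rewrite boolR_indic mulrC; congr (_ * _).
  by apply: ACd; rewrite Aw Aw0.
- by rewrite invr_ge0 ltW // den_gt0.
- exact: mdelta.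
- exact: matom.
rewrite (@atom_int P _ setT (alpha j w0 / den j w0)); first last.
- move=> w Aw; rewrite indicE mem_set // mulr1.
  by apply: ACa; rewrite Aw Aw0.
- by rewrite divr_ge0 //; [case/andP: (ha01 j j0 w0)|rewrite ltW // den_gt0].
- exact: measurableT.
- exact: matom.
have H := hsu j j0 nt (alpha j) (hFa j j0) (ha01 j j0) _ (Fsig_atom j.-1 v).
rewrite (@int_atom_cst P j.-1 v w0 (alpha j) (@Fmeas_AC _ _ (hFa j j0)) Aw0) in H.
rewrite setTI setIC mulrC EFinM -muleA.
apply: lee_wpmul2l; first by rewrite lee_fin invr_ge0 ltW // den_gt0.
exact: H.
Qed.

Lemma memFDP_le t w : memFDP p alpha theta dec t w <=
  \sum_(1 <= j < t.+1 | ~~ theta j) (delta p alpha j w)%:R / den j w.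
Proof.
rewrite /memFDP.
have [R0|Rn0] := eqVneq (Rdec p alpha dec t w) 0.
  rewrite R0 invr0 mulr0; apply: sumr_ge0 => j _.
  by rewrite divr_ge0 // ?ler0n // ltW // den_gt0.
have Rp : 0 < Rdec p alpha dec t w by rewrite lt0r Rn0 Rdec_ge0.
rewrite mulr_suml big_seq_cond [X in _ <= X]big_seq_cond; apply: ler_sum => j /andP[jin _].
move: jin; rewrite mem_index_iota => /andP[j1 jt].
case dj: (delta p alpha j w); last by rewrite mulr0 !mul0r.
rewrite mulr1 mul1r ler_pdivrMr // ler_pdivlMl ?den_gt0 //.
have Rj : Rdec p alpha dec j w = den j w.
  by rewrite /den -{1}(prednK j1) Rdec_rec (prednK j1) dj.
by rewrite mulrC -Rj; apply: Rdec_mono.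
Qed.

Lemma memFDP_AC t : AC t (memFDP p alpha theta dec t).
Proof.
move=> w w' H; rewrite /memFDP (@Rdec_AC dec t t w w' (leqnn _) H); congr (_ / _).
rewrite big_seq_cond [RHS]big_seq_cond; apply: eq_bigr => j /andP[].
rewrite mem_index_iota => /andP[j1 jt] _; rewrite (@delta_AC t j w w') //.
by rewrite j1 -ltnS.
Qed.

Lemma memFDP_ge0 t w : 0 <= memFDP p alpha theta dec t w.
Proof.
rewrite /memFDP divr_ge0 ?Rdec_ge0 //; apply: sumr_ge0 => j _.
by rewrite mulr_ge0 ?ler0n // exprn_ge0.
Qed.

Lemma main_star t :
  (\int[P]_w (memFDP p alpha theta dec t w)%:E <=
   \int[P]_w (memFDPstar p alpha theta dec t w)%:E)%E.
Proof.
apply: (@le_trans _ _ (\int[P]_w (\sum_(1 <= j < t.+1 | ~~ theta j)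
     (delta p alpha j w)%:R / den j w)%:E)%E).
  apply: ge0_le_integral => //.
  - by move=> w _; rewrite lee_fin memFDP_ge0.
  - by apply/measurable_EFinP; exact: AC_meas (@memFDP_AC t).
  - apply/measurable_EFinP; apply: meas_sum => j; rewrite mem_index_iota => /andP[j1 _] _.
    apply: measurable_funM; first by apply: mboolR; exact: mdelta.
    apply: (@AC_meas j.-1) => w w' H; by rewrite (@den_AC j.-1 j (leqnn _) w w' H).
  - by move=> w _; rewrite lee_fin memFDP_le.
rewrite (@int_sum P _ (index_iota 1 t.+1) (fun j => ~~ theta j)
   (fun j w => (delta p alpha j w)%:R / den j w)); last first.
  move=> j; rewrite mem_index_iota => /andP[j1 _] _; split.
    apply: measurable_funM; first by apply: mboolR; exact: mdelta.
    apply: (@AC_meas j.-1) => w w' H; by rewrite (@den_AC j.-1 j (leqnn _) w w' H).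
  by move=> w; rewrite divr_ge0 ?ler0n // ltW // den_gt0.
rewrite (eq_integral (fun w => (\sum_(1 <= j < t.+1 | ~~ theta j) alpha j w / den j w)%:E)) //.
rewrite (@int_sum P _ (index_iota 1 t.+1) (fun j => ~~ theta j)
   (fun j w => alpha j w / den j w)); last first.
  move=> j; rewrite mem_index_iota => /andP[j1 _] _; split.
    apply: (@AC_meas j.-1) => w w' H.
    by rewrite (@den_AC j.-1 j (leqnn _) w w' H) (@alpha_AC j.-1 j j1 (leqnn _) w w' H).
  by move=> w; rewrite divr_ge0 //; [case/andP: (ha01 j j1 w)|rewrite ltW // den_gt0].
rewrite big_seq_cond [X in (_ <= X)%E]big_seq_cond; apply: lee_sum => j /andP[jin nt].
move: jin; rewrite mem_index_iota => /andP[j1 _].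
exact: core1.
Qed.

Lemma sum_sub (s : seq nat) (Pr : pred nat) (F : nat -> R) :
  (forall j, j \in s -> 0 <= F j) -> \sum_(j <- s | Pr j) F j <= \sum_(j <- s) F j.
Proof.
move=> H; rewrite [X in _ <= X](bigID Pr) /= lerDl big_seq_cond.
by apply: sumr_ge0 => j /andP[js _]; exact: H.
Qed.

Lemma esum_sub (s : seq nat) (Pr : pred nat) (F : nat -> \bar R) :
  (forall j, j \in s -> 0 <= F j)%E -> (\sum_(j <- s | Pr j) F j <= \sum_(j <- s) F j)%E.
Proof.
move=> H; rewrite [X in (_ <= X)%E](bigID Pr) /= leeDl // big_seq_cond.
by apply: sume_ge0 => j /andP[js _]; exact: H.
Qed.

Lemma starE t : memFDPstar p alpha theta dec t =
  (fun w => \sum_(1 <= j < t.+1 | ~~ theta j) alpha j w / den j w).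
Proof. by []. Qed.

Lemma star_meas t : measurable_fun setT (memFDPstar p alpha theta dec t).
Proof.
rewrite starE.
apply: meas_sum => j; rewrite mem_index_iota => /andP[j1 _] _.
apply: (@AC_meas j.-1) => w w' H.
by rewrite (@den_AC j.-1 j (leqnn _) w w' H) (@alpha_AC j.-1 j j1 (leqnn _) w w' H).
Qed.

Lemma star_ge0 t w : 0 <= memFDPstar p alpha theta dec t w.
Proof.
rewrite starE big_seq_cond; apply: sumr_ge0 => j /andP[]; rewrite mem_index_iota => /andP[j1 _] _.
by rewrite divr_ge0 //; [case/andP: (ha01 j j1 w)|rewrite ltW // den_gt0].
Qed.

Lemma memFDP0 w : memFDP p alpha theta dec 0 w = 0.
Proof. by rewrite /memFDP big_mkcond big_geq // mul0r. Qed.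

Lemma int_le_cst (alpha0 : R) (f : T -> R) : 0 <= alpha0 -> measurable_fun setT f ->
  (forall w, 0 <= f w) -> {ae P, forall w, f w <= alpha0} ->
  (\int[P]_w (f w)%:E <= alpha0%:E)%E.
Proof.
move=> a0 mf f0 Hae.
rewrite -[X in (_ <= X)%E]mule1 -(@probability_setT _ _ _ P) -integral_cst //.
apply: ae_ge0_le_integral => //.
- by move=> w _; rewrite lee_fin.
- exact/measurable_EFinP.
- by apply: filterS Hae => w Hw _; rewrite /= lee_fin.
Qed.

Lemma partA (alpha0 : R) : 0 < alpha0 ->
  (forall t, (0 < t)%N -> {ae P, forall w, memLevelSum p alpha dec t w <= alpha0}) ->
     forall t, (\int[P]_w (memFDP p alpha theta dec t w)%:E <= alpha0%:E)%E.
Proof.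
move=> a0 Hae [|t].
  rewrite (eq_integral (cst 0%:E)) ?integral0 ?lee_fin ?ltW // => w _.
  by rewrite memFDP0.
apply: le_trans (main_star t.+1) _.
apply: int_le_cst; [exact: ltW|exact: star_meas|exact: star_ge0|].
apply: filterS (Hae t.+1 isT) => w Hw; apply: le_trans Hw.
apply: sum_sub => j; rewrite mem_index_iota => /andP[j1 _].
by rewrite divr_ge0 //; [case/andP: (ha01 j j1 w)|rewrite ltW // den_gt0].
Qed.

Section Lam.
Variable lambda : nat -> T -> R.
Hypothesis ml : forall t, (0 < t)%N -> measurable_fun setT (lambda t).
Hypothesis hl01 : forall t, (0 < t)%N -> forall w, 0 < lambda t w < 1.
Hypothesis hFl : forall t, (0 < t)%N -> Fmeas p alpha t.-1 (lambda t).

Lemma core2 j : (0 < j)%N -> ~~ theta j ->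
  (\int[P]_w (alpha j w / den j w)%:E <=
   \int[P]_w (alpha j w / den j w * ((lambda j w < p j w)%R%:R / (1 - lambda j w)))%:E)%E.
Proof.
move=> j0 nt.
have ACl : AC j.-1 (lambda j) := @Fmeas_AC _ _ (hFl j j0).
have ACa : AC j.-1 (fun w => alpha j w / den j w).
  by move=> w w' H; rewrite (@den_AC j.-1 j (leqnn _) w w' H) (@alpha_AC j.-1 j j0 (leqnn _) w w' H).
have ACi : AC j.-1 (fun w => (1 - lambda j w)^-1).
  by move=> w w' H; rewrite (ACl w w' H).
have l1 w : (0 < 1 - lambda j w)%R by rewrite subr_gt0; case/andP: (hl01 j j0 w).
have K0 w : (0 <= alpha j w / den j w)%R.
  by rewrite divr_ge0 //; [case/andP: (ha01 j j0 w)|rewrite ltW // den_gt0].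
have mS2 : measurable [set w | lambda j w < p j w] by apply: mset_ltr; [exact: ml|exact: mp].
apply: (@compare P j.-1).
- exact: AC_meas ACa.
- exact: K0.
- apply: measurable_funM; first exact: AC_meas ACa.
  apply: measurable_funM; last exact: AC_meas ACi.
  exact: mboolR.
- by move=> w; rewrite mulr_ge0 // divr_ge0 // ?ler0n // ltW.
move=> v w0 Aw0.
have mA := matom j.-1 v.
rewrite (@atom_int P _ setT (alpha j w0 / den j w0)); first last.
- move=> w Aw; rewrite indicE mem_set // mulr1.
  by apply: ACa; rewrite Aw Aw0.
- exact: K0.
- exact: measurableT.
- exact: mA.
rewrite (@atom_int P _ [set w | lambda j w < p j w]
   (alpha j w0 / den j w0 / (1 - lambda j w0))); first last.
- move=> w Aw; rewrite (boolR_indic (fun w => lambda j w < p j w))  (ACa w w0) ?(ACl w w0) ?Aw ?Aw0 //.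
  by rewrite -!mulrA; congr (_ * (_ * _)); rewrite mulrC.
- by rewrite divr_ge0 // ltW.
- exact: mS2.
- exact: mA.
set B := [set w | p j w <= lambda j w].
have mB : measurable B by apply: mset_ler; [exact: mp|exact: ml].
have hl' w : (0 <= lambda j w <= 1)%R by case/andP: (hl01 j j0 w) => a b; rewrite !ltW.
have H := hsu j j0 nt (lambda j) (hFl j j0) hl' _ (Fsig_atom j.-1 v).
rewrite (@int_atom_cst P j.-1 v w0 (lambda j) ACl Aw0) -/B in H.
have eqD : atom j.-1 v `\` B = [set w | lambda j w < p j w] `&` atom j.-1 v.
  apply/seteqP; split => w /=.
    by move=> [Aw nB]; split => //; rewrite ltNge; apply/negP.
  by move=> [lp Aw]; split => //; rewrite /B /= => pl; move: lp; rewrite ltNge pl.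
have HA : P (atom j.-1 v) = (P ([set w | (lambda j w < p j w)%R] `&` atom j.-1 v) + P (atom j.-1 v `&` B))%E.
  by rewrite -eqD; exact: measureDI.
rewrite setTI HA; rewrite HA in H.
have fx : P (atom j.-1 v `&` B) \is a fin_num by apply: fin_num_measure; exact: measurableI.
have fy : P ([set w | lambda j w < p j w] `&` atom j.-1 v) \is a fin_num.
  by apply: fin_num_measure; exact: measurableI.
move: H; rewrite -(fineK fx) -(fineK fy) -EFinD -!EFinM !lee_fin => H.
set x := fine _ in H *; set y := fine _ in H *.
have l1' := l1 w0; have K0' := K0 w0.
set K := alpha j w0 / den j w0 in K0' *.
rewrite -[K / _ * y]mulrA (mulrC _ y); apply: ler_wpM2l => //.
rewrite ler_pdivlMr //.
nra.
Qed.

Lemma term_meas j : (0 < j)%N -> measurable_fun setT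
  (fun w => alpha j w / den j w * ((lambda j w < p j w)%R%:R / (1 - lambda j w))).
Proof.
move=> j0.
have ACl : AC j.-1 (lambda j) := @Fmeas_AC _ _ (hFl j j0).
apply: measurable_funM.
  apply: (@AC_meas j.-1) => w w' H.
  by rewrite (@den_AC j.-1 j (leqnn _) w w' H) (@alpha_AC j.-1 j j0 (leqnn _) w w' H).
apply: measurable_funM.
  by apply: mboolR; apply: mset_ltr; [exact: ml|exact: mp].
by apply: (@AC_meas j.-1) => w w' H; rewrite (ACl w w' H).
Qed.

Lemma term_ge0 j w : (0 < j)%N ->
  0 <= alpha j w / den j w * ((lambda j w < p j w)%R%:R / (1 - lambda j w)).
Proof.
move=> j0; have l1 : 0 < 1 - lambda j w by rewrite subr_gt0; case/andP: (hl01 j j0 w).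
have a0 : 0 <= alpha j w by case/andP: (ha01 j j0 w).
have d0 := den_gt0 j w.
by rewrite mulr_ge0 // divr_ge0 // ?ler0n ?ltW.
Qed.

Lemma hat_meas t : measurable_fun setT (memFDPhat p alpha lambda dec t).
Proof.
by apply: meas_sum => j; rewrite mem_index_iota => /andP[j1 _] _; exact: term_meas.
Qed.

Lemma hat_ge0 t w : 0 <= memFDPhat p alpha lambda dec t w.
Proof.
rewrite /memFDPhat big_seq; apply: sumr_ge0 => j; rewrite mem_index_iota => /andP[j1 _].
exact: term_ge0.
Qed.

Lemma partBi t : (\int[P]_w (memFDPstar p alpha theta dec t w)%:E
                 <= \int[P]_w (memFDPhat p alpha lambda dec t w)%:E)%E.
Proof.
rewrite (eq_integral (fun w => (\sum_(1 <= j < t.+1 | ~~ theta j) alpha j w / den j w)%:E)) //.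
rewrite (@int_sum P _ (index_iota 1 t.+1) (fun j => ~~ theta j)
   (fun j w => alpha j w / den j w)); last first.
  move=> j; rewrite mem_index_iota => /andP[j1 _] _; split.
    apply: (@AC_meas j.-1) => w w' H.
    by rewrite (@den_AC j.-1 j (leqnn _) w w' H) (@alpha_AC j.-1 j j1 (leqnn _) w w' H).
  by move=> w; rewrite divr_ge0 //; [case/andP: (ha01 j j1 w)|rewrite ltW // den_gt0].
rewrite (eq_integral (fun w => (\sum_(1 <= j < t.+1 | true) alpha j w / den j w *
   ((lambda j w < p j w)%R%:R / (1 - lambda j w)))%:E)) //.
rewrite (@int_sum P _ (index_iota 1 t.+1) (fun j => true)
   (fun j w => alpha j w / den j w * ((lambda j w < p j w)%R%:R / (1 - lambda j w)))); last first.
  move=> j; rewrite mem_index_iota => /andP[j1 _] _; split; first exact: term_meas.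
  by move=> w; exact: term_ge0.
apply: (@le_trans _ _ (\sum_(j <- index_iota 1 t.+1 | ~~ theta j)
   \int[P]_w (alpha j w / den j w * ((lambda j w < p j w)%R%:R / (1 - lambda j w)))%:E)%E).
  rewrite big_seq_cond [X in (_ <= X)%E]big_seq_cond; apply: lee_sum => j /andP[jin nt].
  move: jin; rewrite mem_index_iota => /andP[j1 _].
  exact: core2.
apply: esum_sub => j; rewrite mem_index_iota => /andP[j1 _].
by apply: integral_ge0 => w _; rewrite lee_fin; apply: term_ge0.
Qed.

Lemma partBii (alpha0 : R) : 0 < alpha0 ->
  (forall t, (0 < t)%N -> {ae P, forall w, memFDPhat p alpha lambda dec t w <= alpha0}) ->
     forall t, (\int[P]_w (memFDP p alpha theta dec t w)%:E <= alpha0%:E)%E.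
Proof.
move=> a0 Hae [|t].
  rewrite (eq_integral (cst 0%:E)) ?integral0 ?lee_fin ?ltW // => w _.
  by rewrite memFDP0.
apply: le_trans (main_star t.+1) _.
apply: le_trans (partBi t.+1) _.
apply: int_le_cst; [exact: ltW|exact: hat_meas|exact: hat_ge0|exact: Hae].
Qed.

End Lam.

End Main.

End S.

Theorem proposition5 (dT : measure_display) (T : measurableType dT) (R : realType)
  (P : probability T R) (alpha0 dec : R) (theta : nat -> bool)
  (p alpha : nat -> T -> R) :
  0 < alpha0 < 1 ->
  0 < dec <= 1 ->
  (forall t, (0 < t)%N -> measurable_fun setT (p t)) ->
  (forall t, (0 < t)%N -> forall w, 0 <= p t w <= 1) ->
  (forall t, (0 < t)%N -> measurable_fun setT (alpha t)) ->
  (forall t, (0 < t)%N -> forall w, 0 <= alpha t w <= 1) ->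
  (forall t, (0 < t)%N -> Fmeas p alpha t.-1 (alpha t)) ->
  (* conditional super-uniformity: for null t and every F_{t-1}-measurable
     [0,1]-valued U, P(p_t <= U | F_{t-1}) <= U a.s., i.e.
     E[1{p_t <= U} 1_A] <= E[U 1_A] for all A in F_{t-1} *)
  (forall t, (0 < t)%N -> ~~ theta t ->
     forall U : T -> R, Fmeas p alpha t.-1 U -> (forall w, 0 <= U w <= 1) ->
     forall A, Fsig p alpha t.-1 A ->
     (P (A `&` [set w | (p t w <= U w)%R]) <= \int[P]_(w in A) (U w)%:E)%E) ->
  (* (a) *)
  ((forall t, (0 < t)%N -> {ae P, forall w, memLevelSum p alpha dec t w <= alpha0}) ->
     forall t, (\int[P]_w (memFDP p alpha theta dec t w)%:E <= alpha0%:E)%E)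
  /\
  (* (b) *)
  (forall lambda : nat -> T -> R,
     (forall t, (0 < t)%N -> measurable_fun setT (lambda t)) ->
     (forall t, (0 < t)%N -> forall w, 0 < lambda t w < 1) ->
     (forall t, (0 < t)%N -> Fmeas p alpha t.-1 (lambda t)) ->
     (forall t, (\int[P]_w (memFDPstar p alpha theta dec t w)%:E
                 <= \int[P]_w (memFDPhat p alpha lambda dec t w)%:E)%E)
     /\
     ((forall t, (0 < t)%N -> {ae P, forall w, memFDPhat p alpha lambda dec t w <= alpha0}) ->
        forall t, (\int[P]_w (memFDP p alpha theta dec t w)%:E <= alpha0%:E)%E)).
Proof.
move=> ha0 hdec hmp hp01 hma ha01 hFa hsu.
have a0 : 0 < alpha0 by case/andP: ha0.
split.
  exact: (@partA _ _ _ p alpha hmp hma P dec theta hdec ha01 hFa hsu alpha0 a0).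
move=> lambda ml hl01 hFl; split.
  exact: (@partBi _ _ _ p alpha hmp hma P dec theta hdec ha01 hFa hsu lambda ml hl01 hFl).
exact: (@partBii _ _ _ p alpha hmp hma P dec theta hdec ha01 hFa hsu lambda ml hl01 hFl alpha0 a0).
Qed.
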